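(* Let $\tau\in\mathcal T_1$ and $t>0$ with $2/t$ not a positive integer. If $\psi$ is an Ad-invariant distribution on $SU(2)$ such that $z\mapsto|C^\tau_t(\psi)(d(z))|^2|\sigma(z)|^2\exp(-\frac{4\pi}{t\tau_2}(\mathrm{Im}\,z)^2)$ is invariant under $z\mapsto z+\tau$, then $\psi=0$.
   Context: $d(z)=\mathrm{diag}(e^{2\pi iz},e^{-2\pi iz})$, $\sigma(z)=e^{2\pi iz}-e^{-2\pi iz}$. $\chi_m$ ($m\ge0$) the character of the $(m+1)$-dimensional irreducible representation of $SU(2)$, $c_m=((m+1)^2-1)/2$. Ad-invariant distribution: formal series $\psi=\sum_{m\ge0}a_m\chi_m$ with $|a_m|(1+m^2)^{-N}\to0$ for some $N$. $\mathcal T_1=\{\mathrm{Im}\,\tau>0\}$, $\tau_2=\mathrm{Im}\,\tau$, $C^\tau_t(\psi)(g)=\sum_ma_me^{i\pi\tau tc_m}\chi_m(g)$, $g\in SL(2,\mathbb C)$. *)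

(* Defs.v *)
From Stdlib Require Import Reals.
From Coquelicot Require Import Coquelicot.
Open Scope R_scope.

Notation CC := Complex.C.

Definition cexp (z : CC) : CC :=
  (exp (Re z) * cos (Im z), exp (Re z) * sin (Im z)).

(* d(z) = diag(e^{2 pi i z}, e^{-2 pi i z}); the character chi_m of the
   (m+1)-dim irrep of SU(2) (Sym^m of the standard rep), extended to SL(2,C),
   evaluated at d(z):  sum_{k=0}^m e^{2 pi i (m-2k) z}. *)
Definition chi_d (m : nat) (z : CC) : CC :=
  sum_n (fun k => cexp (Cmult (RtoC (2 * PI * (INR m - 2 * INR k))) (Cmult Ci z))) m.

Definition sigma (z : CC) : CC :=
  Cminus (cexp (Cmult (RtoC (2 * PI)) (Cmult Ci z)))
         (cexp (Cmult (RtoC (- (2 * PI))) (Cmult Ci z))).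

Definition cm (m : nat) : R := ((INR m + 1) ^ 2 - 1) / 2.

(* Ad-invariant distribution: coefficient sequence of psi = sum a_m chi_m
   with |a_m| (1+m^2)^{-N} -> 0 for some N. *)
Definition ad_inv_distribution (a : nat -> CC) : Prop :=
  exists N : nat, is_lim_seq (fun m => Cmod (a m) / (1 + INR m ^ 2) ^ N) 0.

Definition heat_term (a : nat -> CC) (tau : CC) (t : R) (z : CC) (m : nat) : CC :=
  Cmult (Cmult (a m) (cexp (Cmult (Cmult Ci (RtoC (PI * t * cm m))) tau))) (chi_d m z).

(* C^tau_t(psi)(d(z)) = sum_m a_m e^{i pi tau t c_m} chi_m(d(z)), the (absolutely
   convergent) complex series summed componentwise. *)
Definition heat_op (a : nat -> CC) (tau : CC) (t : R) (z : CC) : CC :=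
  (Series (fun m => Re (heat_term a tau t z m)),
   Series (fun m => Im (heat_term a tau t z m))).

Definition weighted_density (a : nat -> CC) (tau : CC) (t : R) (z : CC) : R :=
  Cmod (heat_op a tau t z) ^ 2 * Cmod (sigma z) ^ 2
  * exp (- (4 * PI / (t * Im tau)) * Im z ^ 2).

(* Main.v *)
Require Import Defs.
From Stdlib Require Import Reals.
From Coquelicot Require Import Coquelicot.
Open Scope R_scope.
From Stdlib Require Import Lra Lia Factorial ZArith.
Open Scope R_scope.

Lemma ex_series_le_R (a b : nat -> R) :
  (forall n, Rabs (a n) <= b n) -> ex_series b -> ex_series a.
Proof. intros H Hb. apply (ex_series_le a b); [exact H| exact Hb]. Qed.

Lemma ex_series_plus_R (a b : nat -> R) :
  ex_series a -> ex_series b -> ex_series (fun n => a n + b n).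
Proof. intros Ha Hb. exact (ex_series_plus a b Ha Hb). Qed.

Lemma ex_series_scal_R (c : R) (a : nat -> R) :
  ex_series a -> ex_series (fun n => c * a n).
Proof. intros Ha. exact (ex_series_scal c a Ha). Qed.

Lemma ex_series_abs_le (a b : nat -> R) :
  (forall n, Rabs (a n) <= b n) -> ex_series b -> ex_series (fun n => Rabs (a n)).
Proof. intros H Hb. apply (ex_series_le_R _ b); auto. intro n; rewrite Rabs_Rabsolu; auto. Qed.

Lemma ex_series_pos_bound (a : nat -> R) (B : R) :
  (forall n, 0 <= a n) -> (forall N, sum_f_R0 a N <= B) -> ex_series a.
Proof.
  intros Hp Hb. apply ex_series_Reals_1.
  apply growing_cv.
  - intro n. simpl. specialize (Hp (S n)). lra.
  - exists B. intros x [N ->]. apply Hb.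
Qed.

Lemma Series_Un_cv (a : nat -> R) : ex_series a -> Un_cv (sum_f_R0 a) (Series a).
Proof.
  intro H. apply Series_correct in H. apply is_series_Reals in H. exact H.
Qed.

Lemma partial_le_Series (a : nat -> R) :
  (forall n, 0 <= a n) -> ex_series a -> forall N, sum_f_R0 a N <= Series a.
Proof.
  intros Hp He N. apply growing_ineq.
  - intro n. simpl. specialize (Hp (S n)). lra.
  - apply Series_Un_cv; auto.
Qed.

Lemma term_le_Series (a : nat -> R) :
  (forall n, 0 <= a n) -> ex_series a -> forall N, a N <= Series a.
Proof.
  intros Hp He N. eapply Rle_trans; [|apply (partial_le_Series a Hp He N)].
  destruct N; simpl; [lra|]. assert (0 <= sum_f_R0 a N).
  { apply cond_pos_sum; auto. } lra.
Qed.

Lemma Series_le_bound (a : nat -> R) (B : R) :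
  ex_series a -> (forall N, sum_f_R0 a N <= B) -> Series a <= B.
Proof.
  intros He Hb. apply Series_Un_cv in He.
  apply Rnot_lt_le; intro Hlt.
  destruct (He (Series a - B)) as [N HN]; [lra|].
  specialize (HN N (le_n _)). specialize (Hb N). unfold Rdist in HN.
  apply Rabs_def2 in HN. lra.
Qed.

Lemma Series_nonneg (a : nat -> R) : (forall n, 0 <= a n) -> ex_series a -> 0 <= Series a.
Proof.
  intros H He. eapply Rle_trans; [|apply (term_le_Series a H He 0)]. auto.
Qed.

Lemma sum_Series (f : nat -> nat -> R) (N : nat) :
  (forall l, ex_series (f l)) ->
  ex_series (fun m => sum_f_R0 (fun l => f l m) N) /\
  sum_f_R0 (fun l => Series (f l)) N = Series (fun m => sum_f_R0 (fun l => f l m) N).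
Proof.
  intro H. induction N as [|N [IH1 IH2]]; simpl.
  - split; auto.
  - split.
    + apply ex_series_plus_R; auto.
    + rewrite IH2, Series_plus; auto.
Qed.

Lemma Series_tail (a : nat -> R) (N : nat) :
  ex_series a -> Series a - sum_f_R0 a N = Series (fun k => a (S N + k)%nat).
Proof.
  intro H. rewrite (Series_incr_n a (S N)); [simpl; ring| lia | auto].
Qed.

Lemma ex_series_tail (a : nat -> R) (N : nat) :
  ex_series a -> ex_series (fun k => a (S N + k)%nat).
Proof. intro H. apply (ex_series_incr_n a (S N)). auto. Qed.

Lemma is_lim_seq_sum (T : nat -> nat -> R) (I : nat) :
  (forall i, is_lim_seq (fun N => T N i) 0) ->
  is_lim_seq (fun N => sum_f_R0 (T N) I) 0.
Proof.
  intro H. induction I; simpl; auto.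
  replace (Finite 0) with (Finite (0 + 0)) by (f_equal; ring).
  apply is_lim_seq_plus'; auto.
Qed.

Lemma dcs (T : nat -> nat -> R) (A : nat -> R) :
  (forall N i, 0 <= T N i <= A i) -> ex_series A ->
  (forall i, is_lim_seq (fun N => T N i) 0) ->
  is_lim_seq (fun N => Series (T N)) 0.
Proof.
  intros HT HA Hl. apply is_lim_seq_Reals. intros eps Heps.
  pose proof (Series_Un_cv A HA) as HcA.
  destruct (HcA (eps/2)) as [I HI]; [lra|].
  specialize (HI I (le_n _)). unfold Rdist in HI.
  assert (Htail : Series (fun k => A (S I + k)%nat) < eps/2).
  { rewrite <- Series_tail; auto. apply Rabs_def2 in HI. lra. }
  pose proof (is_lim_seq_sum T I Hl) as Hs. apply is_lim_seq_Reals in Hs.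
  destruct (Hs (eps/2)) as [N0 HN0]; [lra|].
  exists N0. intros N HN. specialize (HN0 N HN). unfold Rdist in *.
  rewrite Rminus_0_r in *.
  assert (HeT : ex_series (T N)).
  { apply (ex_series_le_R _ A); auto. intro n. rewrite Rabs_pos_eq; apply HT. }
  rewrite (Series_incr_n (T N) (S I)); [|lia|auto]. simpl Init.Nat.pred.
  assert (H1 : Series (fun k => T N (S I + k)%nat) <= Series (fun k => A (S I + k)%nat)).
  { apply Series_le; [intro n; apply HT| apply ex_series_tail; auto]. }
  assert (H2 : 0 <= Series (fun k => T N (S I + k)%nat)).
  { apply Series_nonneg; [intro; apply HT| apply ex_series_tail; auto]. }
  assert (H3 : 0 <= sum_f_R0 (T N) I).
  { apply cond_pos_sum; intro; apply HT. }
  rewrite Rabs_pos_eq in HN0 by lra. rewrite Rabs_pos_eq by lra. lra.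
Qed.

Lemma fubini_col (u : nat -> nat -> R) :
  (forall i, ex_series (fun j => Rabs (u i j))) ->
  ex_series (fun i => Series (fun j => Rabs (u i j))) ->
  forall j, ex_series (fun i => Rabs (u i j)).
Proof.
  intros H1 H2 j. apply (ex_series_le_R _ (fun i => Series (fun j => Rabs (u i j)))); auto.
  intro i. rewrite Rabs_Rabsolu.
  apply (term_le_Series (fun j => Rabs (u i j))); auto. intro; apply Rabs_pos.
Qed.

Lemma fubini (u : nat -> nat -> R) :
  (forall i, ex_series (fun j => Rabs (u i j))) ->
  ex_series (fun i => Series (fun j => Rabs (u i j))) ->
  is_series (fun j => Series (fun i => u i j)) (Series (fun i => Series (fun j => u i j))).
Proof.
  intros H1 H2.
  pose proof (fubini_col u H1 H2) as Hc.
  set (A := fun i => Series (fun j => Rabs (u i j))).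
  set (Rt := fun N i => Series (fun k => Rabs (u i (S N + k)%nat))).
  assert (HRt : forall N i, 0 <= Rt N i <= A i).
  { intros N i. unfold Rt, A. split.
    - apply Series_nonneg; [intro; apply Rabs_pos| apply (ex_series_tail (fun j => Rabs (u i j))); auto].
    - rewrite <- (Series_tail (fun j => Rabs (u i j))); auto. assert (0 <= sum_f_R0 (fun j => Rabs (u i j)) N).
      { apply cond_pos_sum; intro; apply Rabs_pos. } lra. }
  assert (Hlim : forall i, is_lim_seq (fun N => Rt N i) 0).
  { intro i. apply is_lim_seq_Reals. unfold Rt.
    pose proof (Series_Un_cv _ (H1 i)) as Hc1. intros eps Heps.
    destruct (Hc1 eps Heps) as [N0 HN0]. exists N0. intros N HN.
    specialize (HN0 N HN). unfold Rdist in *. rewrite <- (Series_tail (fun j => Rabs (u i j))); auto.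
    rewrite Rabs_minus_sym in HN0. rewrite Rminus_0_r. exact HN0. }
  pose proof (dcs Rt A HRt H2 Hlim) as HD.
  apply is_series_Reals. intros eps Heps.
  apply is_lim_seq_Reals in HD. destruct (HD eps Heps) as [N0 HN0].
  exists N0. intros N HN. specialize (HN0 N HN). unfold Rdist in *.
  rewrite Rminus_0_r in HN0.
  assert (Hex : forall i, ex_series (u i)).
  { intro i. apply ex_series_Rabs. auto. }
  destruct (sum_Series (fun j i => u i j) N) as [Hs1 Hs2].
  { intro l. apply ex_series_Rabs; auto. }
  rewrite Hs2.
  assert (HeS : ex_series (fun i => Series (u i))).
  { apply (ex_series_le_R _ A); auto. intro i. unfold A. apply Series_Rabs; auto. }
  rewrite <- Series_minus; auto.
  rewrite (Series_ext _ (fun i => - Series (fun k => u i (S N + k)%nat))).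
  2:{ intro i. rewrite <- (Series_tail (u i) N) by auto. change (fun j => u i j) with (u i). ring. }
  rewrite Series_opp, Rabs_Ropp.
  assert (Hb : forall i, Rabs (Series (fun k => u i (S N + k)%nat)) <= Rt N i).
  { intro i. apply Series_Rabs. apply (ex_series_tail (fun j => Rabs (u i j))). auto. }
  eapply Rle_lt_trans; [apply Series_Rabs|].
  { apply (ex_series_abs_le _ A); auto. intro i. eapply Rle_trans; [apply Hb| apply HRt]. }
  eapply Rle_lt_trans; [| rewrite Rabs_pos_eq in HN0; [exact HN0|] ].
  - apply Series_le.
    + intro i. split; [apply Rabs_pos| apply Hb].
    + apply (ex_series_le_R _ A); auto. intro i. rewrite Rabs_pos_eq; apply HRt.
  - apply Series_nonneg; [intro; apply HRt| apply (ex_series_le_R _ A); auto].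
    intro i. rewrite Rabs_pos_eq; apply HRt.
Qed.

Lemma ex_series_ext_R (a b : nat -> R) : (forall n, a n = b n) -> ex_series a -> ex_series b.
Proof. intros H Ha. exact (ex_series_ext a b H Ha). Qed.


Lemma fubini_ex (u : nat -> nat -> R) :
  (forall i, ex_series (fun j => Rabs (u i j))) ->
  ex_series (fun i => Series (fun j => Rabs (u i j))) ->
  ex_series (fun j => Series (fun i => u i j)) /\
  Series (fun j => Series (fun i => u i j)) = Series (fun i => Series (fun j => u i j)).
Proof.
  intros H1 H2. pose proof (fubini u H1 H2) as H. split.
  - eexists; eauto.
  - apply is_series_unique; auto.
Qed.

Lemma fubini3_is (v : nat -> nat -> nat -> R) :
  (forall i j, ex_series (fun k => Rabs (v i j k))) ->
  (forall i, ex_series (fun j => Series (fun k => Rabs (v i j k)))) ->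
  ex_series (fun i => Series (fun j => Series (fun k => Rabs (v i j k)))) ->
  ex_series (fun k => Series (fun i => Series (fun j => v i j k))) /\
  Series (fun k => Series (fun i => Series (fun j => v i j k))) =
  Series (fun i => Series (fun j => Series (fun k => v i j k))).
Proof.
  intros H1 H2 H3.
  assert (S1 : forall i, Series (fun j => Series (fun k => v i j k)) = Series (fun k => Series (fun j => v i j k))).
  { intro i. symmetry. apply fubini_ex; auto. }
  assert (S1a : forall i, ex_series (fun k => Series (fun j => Rabs (v i j k))) /\
      Series (fun k => Series (fun j => Rabs (v i j k))) = Series (fun j => Series (fun k => Rabs (v i j k)))).
  { intro i. apply (fubini_ex (fun j k => Rabs (v i j k))).
    - intro j. apply (ex_series_ext_R (fun k => Rabs (v i j k))); auto. intro; rewrite Rabs_Rabsolu; auto.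
    - apply (ex_series_ext_R (fun j => Series (fun k => Rabs (v i j k)))); auto.
      intro j; apply Series_ext; intro; rewrite Rabs_Rabsolu; auto. }
  assert (Hcol : forall i k, ex_series (fun j => Rabs (v i j k))).
  { intros i k. apply (fubini_col (fun j k => v i j k)); auto. }
  set (U := fun i k => Series (fun j => v i j k)).
  assert (HU : forall i k, Rabs (U i k) <= Series (fun j => Rabs (v i j k))).
  { intros i k. apply Series_Rabs. auto. }
  assert (HU1 : forall i, ex_series (fun k => Rabs (U i k))).
  { intro i. apply (ex_series_abs_le _ (fun k => Series (fun j => Rabs (v i j k)))); auto.
    apply S1a. }
  assert (HU2 : ex_series (fun i => Series (fun k => Rabs (U i k)))).
  { apply (ex_series_le_R _ (fun i => Series (fun j => Series (fun k => Rabs (v i j k))))); auto.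
    intro i. rewrite Rabs_pos_eq.
    2:{ apply Series_nonneg; auto. intro; apply Rabs_pos. }
    destruct (S1a i) as [Ha Hb]. rewrite <- Hb. apply Series_le; auto.
    intro k. split; [apply Rabs_pos| apply HU]. }
  destruct (fubini_ex U HU1 HU2) as [E1 E2]. unfold U in E1, E2. split.
  - exact E1.
  - rewrite E2. apply Series_ext. intro i. rewrite S1. reflexivity.
Qed.

Lemma fubini3 (v : nat -> nat -> nat -> R) :
  (forall i j, ex_series (fun k => Rabs (v i j k))) ->
  (forall i, ex_series (fun j => Series (fun k => Rabs (v i j k)))) ->
  ex_series (fun i => Series (fun j => Series (fun k => Rabs (v i j k)))) ->
  ex_series (fun k => Rabs (Series (fun i => Series (fun j => v i j k)))) /\
  Series (fun k => Series (fun i => Series (fun j => v i j k))) =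
  Series (fun i => Series (fun j => Series (fun k => v i j k))).
Proof.
  intros H1 H2 H3. split; [|apply fubini3_is; auto].
  destruct (fubini3_is (fun i j k => Rabs (v i j k))) as [E _].
  - intros i j. apply (ex_series_ext_R (fun k => Rabs (v i j k))); auto. intro; rewrite Rabs_Rabsolu; auto.
  - intro i. apply (ex_series_ext_R (fun j => Series (fun k => Rabs (v i j k)))); auto.
    intro j; apply Series_ext; intro; rewrite Rabs_Rabsolu; auto.
  - apply (ex_series_ext_R (fun i => Series (fun j => Series (fun k => Rabs (v i j k))))); auto.
    intro i; apply Series_ext; intro j; apply Series_ext; intro; rewrite Rabs_Rabsolu; auto.
  - assert (Hcol : forall i k, ex_series (fun j => Rabs (v i j k))).
    { intros i k. apply (fubini_col (fun j k => v i j k)); auto. }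
    assert (Hik : forall k, ex_series (fun i => Series (fun j => Rabs (v i j k)))).
    { intro k. apply (ex_series_le_R _ (fun i => Series (fun j => Series (fun k => Rabs (v i j k))))); auto.
      intro i. rewrite Rabs_pos_eq by (apply Series_nonneg; auto; intro; apply Rabs_pos).
      apply Series_le; auto. intro j. split; [apply Rabs_pos|].
      apply (term_le_Series (fun k => Rabs (v i j k))); auto. intro; apply Rabs_pos. }
    apply (ex_series_abs_le _ (fun k => Series (fun i => Series (fun j => Rabs (v i j k))))); [|exact E].
    intro k. eapply Rle_trans; [apply Series_Rabs|].
    + apply (ex_series_abs_le _ (fun i => Series (fun j => Rabs (v i j k)))); auto.
      intro i. apply Series_Rabs. auto.
    + apply Series_le; auto. intro i. split; [apply Rabs_pos|]. apply Series_Rabs; auto.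
Qed.

Lemma exp_series (x : R) : exp x = Series (fun k => x ^ k / INR (fact k)).
Proof.
  rewrite exp_Reals. unfold PSeries. apply Series_ext. intro; unfold Rdiv; ring.
Qed.

Lemma exp_series_ex (x : R) : ex_series (fun k => x ^ k / INR (fact k)).
Proof.
  pose proof (is_exp_Reals x) as H. apply (ex_series_ext_R (fun k => / INR (fact k) * x ^ k)).
  - intro; unfold Rdiv; ring.
  - apply (proj1 (ex_pseries_R _ _)). eexists; exact H.
Qed.

Lemma abs_exp_term (x : R) (k : nat) : Rabs (x ^ k / INR (fact k)) = Rabs x ^ k / INR (fact k).
Proof.
  unfold Rdiv. rewrite Rabs_mult, RPow_abs, Rabs_inv, (Rabs_pos_eq (INR _)); auto.
  apply pos_INR.
Qed.

Lemma exp_series_abs (x : R) : ex_series (fun k => Rabs (x ^ k / INR (fact k))).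
Proof.
  apply (ex_series_ext_R (fun k => Rabs x ^ k / INR (fact k))); [|apply exp_series_ex].
  intro; rewrite abs_exp_term; auto.
Qed.

Lemma cos_series (x : R) : cos x = Series (fun k => cos_n k * x ^ (2 * k)).
Proof.
  unfold cos. destruct (exist_cos (Rsqr x)) as [a Ha]. unfold cos_in in Ha.
  symmetry. apply is_series_unique. apply is_series_Reals.
  intros eps Heps. destruct (Ha eps Heps) as [N HN]. exists N. intros n Hn.
  rewrite (sum_eq _ (fun i => cos_n i * x² ^ i)); auto.
  intros i _. rewrite pow_mult. unfold Rsqr. simpl. rewrite Rmult_1_r. reflexivity.
Qed.

Lemma fact_pos (k : nat) : 0 < INR (fact k).
Proof. apply INR_fact_lt_0. Qed.

Lemma cos_abs_term (x : R) (k : nat) : Rabs (cos_n k * x ^ (2 * k)) = Rabs x ^ (2 * k) / INR (fact (2 * k)).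
Proof.
  unfold cos_n, Rdiv. rewrite !Rabs_mult, Rabs_inv, RPow_abs, pow_1_abs, Rabs_pos_eq.
  - ring.
  - left; apply fact_pos.
Qed.

Lemma even_partial (x : R) (N : nat) : 0 <= x ->
  sum_f_R0 (fun k => x ^ (2 * k) / INR (fact (2 * k))) N <= sum_f_R0 (fun j => x ^ j / INR (fact j)) (2 * N).
Proof.
  intro Hx. induction N.
  - simpl. lra.
  - set (g := fun j => x ^ j / INR (fact j)).
    change (sum_f_R0 (fun k => x ^ (2 * k) / INR (fact (2 * k))) (S N)) with
      (sum_f_R0 (fun k => x ^ (2 * k) / INR (fact (2 * k))) N + x ^ (2 * S N) / INR (fact (2 * S N))).
    replace (2 * S N)%nat with (S (S (2 * N))) by lia.
    change (sum_f_R0 g (S (S (2 * N)))) with (sum_f_R0 g (2 * N) + g (S (2 * N)) + g (S (S (2 * N)))).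
    assert (0 <= g (S (2 * N))).
    { unfold g, Rdiv; apply Rmult_le_pos; [apply pow_le; auto| left; apply Rinv_0_lt_compat, fact_pos]. }
    unfold g in *. lra.
Qed.

Lemma cos_series_abs (x : R) : ex_series (fun k => Rabs (cos_n k * x ^ (2 * k))) /\
  Series (fun k => Rabs (cos_n k * x ^ (2 * k))) <= exp (Rabs x).
Proof.
  assert (Hb : forall N, sum_f_R0 (fun k => Rabs (cos_n k * x ^ (2 * k))) N <= exp (Rabs x)).
  { intro N. rewrite (sum_eq _ (fun k => Rabs x ^ (2 * k) / INR (fact (2 * k)))).
    2:{ intros; apply cos_abs_term. }
    eapply Rle_trans; [apply even_partial, Rabs_pos|]. apply exp_ge_taylor, Rabs_pos. }
  assert (He : ex_series (fun k => Rabs (cos_n k * x ^ (2 * k)))).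
  { apply (ex_series_pos_bound _ (exp (Rabs x))); auto. intro; apply Rabs_pos. }
  split; auto. apply Series_le_bound; auto.
Qed.

Definition dom2 (d w : nat -> nat -> R) := forall R, 0 <= R ->
  (forall i, ex_series (fun j => Rabs (d i j) * exp (Rabs (w i j) * R))) /\
  ex_series (fun i => Series (fun j => Rabs (d i j) * exp (Rabs (w i j) * R))).
Definition ES2 (d w : nat -> nat -> R) (y : R) :=
  Series (fun i => Series (fun j => d i j * exp (w i j * y))).
Definition EC2 (d w : nat -> nat -> R) (th : R) :=
  Series (fun i => Series (fun j => d i j * cos (w i j * th))).
Definition Mom (d w : nat -> nat -> R) (k : nat) :=
  Series (fun i => Series (fun j => d i j * w i j ^ k)).

Lemma ES2_expand d w y : dom2 d w ->
  ex_series (fun k => Rabs (Mom d w k / INR (fact k) * y ^ k)) /\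
  ES2 d w y = Series (fun k => Mom d w k / INR (fact k) * y ^ k).
Proof.
  intro Hd. destruct (Hd (Rabs y) (Rabs_pos y)) as [Hd1 Hd2].
  set (v := fun i j k => d i j * ((w i j * y) ^ k / INR (fact k))).
  assert (Hv : forall i j, Series (fun k => Rabs (v i j k)) = Rabs (d i j) * exp (Rabs (w i j) * Rabs y)).
  { intros i j. unfold v. rewrite (Series_ext _ (fun k => Rabs (d i j) * Rabs ((w i j * y) ^ k / INR (fact k)))).
    2:{ intro; apply Rabs_mult. }
    rewrite Series_scal_l, <- Rabs_mult. rewrite (exp_series (Rabs (w i j * y))).
    f_equal. apply Series_ext. intro; apply abs_exp_term. }
  destruct (fubini3 v) as [F1 F2].
  - intros i j. unfold v. apply (ex_series_ext_R (fun k => Rabs (d i j) * Rabs ((w i j * y) ^ k / INR (fact k)))).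
    { intro; symmetry; apply Rabs_mult. }
    apply ex_series_scal_R, exp_series_abs.
  - intro i. apply (ex_series_ext_R (fun j => Rabs (d i j) * exp (Rabs (w i j) * Rabs y)));
      [intro j; rewrite Hv; reflexivity| auto].
  - apply (ex_series_ext_R (fun i => Series (fun j => Rabs (d i j) * exp (Rabs (w i j) * Rabs y))));
      [intro i; apply Series_ext; intro j; rewrite Hv; reflexivity| auto].
  - assert (Hm : forall k, Series (fun i => Series (fun j => v i j k)) = Mom d w k / INR (fact k) * y ^ k).
    { intro k. unfold Mom, v.
      transitivity (Series (fun i => Series (fun j => d i j * w i j ^ k)) * (y ^ k / INR (fact k))).
      2:{ unfold Rdiv; ring. }
      rewrite <- Series_scal_r. apply Series_ext. intro i.
      rewrite <- Series_scal_r. apply Series_ext. intro j. rewrite Rpow_mult_distr. unfold Rdiv; ring. }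
    split.
    + apply (ex_series_ext_R _ _ (fun k => f_equal Rabs (Hm k))). exact F1.
    + unfold ES2. rewrite (Series_ext _ _ Hm) in F2. rewrite F2.
      apply Series_ext. intro i. apply Series_ext. intro j. unfold v.
      rewrite Series_scal_l, exp_series. reflexivity.
Qed.

Lemma EC2_expand d w th : dom2 d w ->
  EC2 d w th = Series (fun k => cos_n k * th ^ (2 * k) * Mom d w (2 * k)).
Proof.
  intro Hd. destruct (Hd (Rabs th) (Rabs_pos th)) as [Hd1 Hd2].
  set (v := fun i j k => d i j * (cos_n k * (w i j * th) ^ (2 * k))).
  assert (Hv : forall i j, ex_series (fun k => Rabs (v i j k)) /\ Series (fun k => Rabs (v i j k)) <= Rabs (d i j) * exp (Rabs (w i j) * Rabs th)).
  { intros i j. unfold v. destruct (cos_series_abs (w i j * th)) as [C1 C2].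
    rewrite (Series_ext _ (fun k => Rabs (d i j) * Rabs (cos_n k * (w i j * th) ^ (2 * k)))).
    2:{ intro; apply Rabs_mult. }
    split.
    - apply (ex_series_ext_R (fun k => Rabs (d i j) * Rabs (cos_n k * (w i j * th) ^ (2 * k)))).
      { intro; symmetry; apply Rabs_mult. }
      apply ex_series_scal_R; auto.
    - rewrite Series_scal_l, <- Rabs_mult. apply Rmult_le_compat_l; [apply Rabs_pos|auto]. }
  destruct (fubini3 v) as [F1 F2].
  - intros i j. apply Hv.
  - intro i. apply (ex_series_le_R _ (fun j => Rabs (d i j) * exp (Rabs (w i j) * Rabs th))); auto.
    intro j. rewrite Rabs_pos_eq; [apply Hv|]. apply Series_nonneg; [intro; apply Rabs_pos| apply Hv].
  - apply (ex_series_le_R _ (fun i => Series (fun j => Rabs (d i j) * exp (Rabs (w i j) * Rabs th)))); auto.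
    intro i. rewrite Rabs_pos_eq.
    + apply Series_le; auto. intro j. split; [apply Series_nonneg; [intro; apply Rabs_pos| apply Hv]| apply Hv].
    + apply Series_nonneg.
      * intro j. apply Series_nonneg; [intro; apply Rabs_pos| apply Hv].
      * apply (ex_series_le_R _ (fun j => Rabs (d i j) * exp (Rabs (w i j) * Rabs th))); auto.
        intro j. rewrite Rabs_pos_eq; [apply Hv|]. apply Series_nonneg; [intro; apply Rabs_pos| apply Hv].
  - assert (Hm : forall k, Series (fun i => Series (fun j => v i j k)) = cos_n k * th ^ (2 * k) * Mom d w (2 * k)).
    { intro k. unfold Mom, v. rewrite <- Series_scal_l. apply Series_ext. intro i.
      rewrite <- Series_scal_l. apply Series_ext. intro j. rewrite Rpow_mult_distr. ring. }
    unfold EC2. rewrite (Series_ext _ _ Hm) in F2. rewrite F2.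
    apply Series_ext. intro i. apply Series_ext. intro j. unfold v.
    rewrite Series_scal_l, cos_series. reflexivity.
Qed.

Lemma radius_ge_1 (c : nat -> R) : ex_series (fun k => Rabs (c k * 1 ^ k)) -> Rbar_lt 0 (CV_radius c).
Proof.
  intro H. pose proof (CV_radius_bounded c) as [Hub _].
  assert (Hle : Rbar_le 1 (CV_radius c)).
  { apply Hub. exists (Series (fun k => Rabs (c k * 1 ^ k))). intro n.
    apply (term_le_Series (fun k => Rabs (c k * 1 ^ k))); auto. intro; apply Rabs_pos. }
  eapply Rbar_lt_le_trans; [|exact Hle]. simpl. lra.
Qed.

Lemma claim (d1 w1 d2 w2 : nat -> nat -> R) :
  dom2 d1 w1 -> dom2 d2 w2 -> (forall y, ES2 d1 w1 y = ES2 d2 w2 y) ->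
  forall th, EC2 d1 w1 th = EC2 d2 w2 th.
Proof.
  intros H1 H2 Heq th.
  set (c1 := fun k => Mom d1 w1 k / INR (fact k)).
  set (c2 := fun k => Mom d2 w2 k / INR (fact k)).
  assert (R1 : Rbar_lt 0 (CV_radius c1)).
  { apply radius_ge_1. apply (ES2_expand d1 w1 1 H1). }
  assert (R2 : Rbar_lt 0 (CV_radius c2)).
  { apply radius_ge_1. apply (ES2_expand d2 w2 1 H2). }
  assert (Hc : forall n, c1 n = c2 n).
  { intro n. apply PSeries_ext_recip; auto.
    exists (mkposreal 1 Rlt_0_1). intros y _. unfold PSeries.
    destruct (ES2_expand d1 w1 y H1) as [_ E1]. destruct (ES2_expand d2 w2 y H2) as [_ E2].
    unfold c1, c2. rewrite <- E1, <- E2. apply Heq. }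
  assert (HM : forall n, Mom d1 w1 n = Mom d2 w2 n).
  { intro n. specialize (Hc n). unfold c1, c2 in Hc. pose proof (fact_pos n).
    apply (Rmult_eq_reg_r (/ INR (fact n))); [exact Hc|]. apply Rinv_neq_0_compat. lra. }
  rewrite (EC2_expand d1 w1 th H1), (EC2_expand d2 w2 th H2).
  apply Series_ext. intro k. rewrite HM. reflexivity.
Qed.


Lemma c_eq (u v : CC) : fst u = fst v -> snd u = snd v -> u = v.
Proof. destruct u, v; simpl; intros -> ->; reflexivity. Qed.

Lemma re_le_Cmod' (c : CC) : Rabs (fst c) <= Cmod c.
Proof. eapply Rle_trans; [apply Rmax_l| apply Rmax_Cmod]. Qed.
Lemma im_le_Cmod' (c : CC) : Rabs (snd c) <= Cmod c.
Proof. eapply Rle_trans; [apply Rmax_r| apply Rmax_Cmod]. Qed.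

Lemma Cmod_sq (c : CC) : Cmod c ^ 2 = fst c ^ 2 + snd c ^ 2.
Proof. unfold Cmod. rewrite pow2_sqrt; [reflexivity|]. nra. Qed.

Lemma exp_INR_mult (n : nat) (x : R) : exp (INR n * x) = exp x ^ n.
Proof.
  induction n.
  - simpl. rewrite Rmult_0_l. apply exp_0.
  - rewrite S_INR, Rmult_plus_distr_r, exp_plus, IHn, Rmult_1_l. simpl. ring.
Qed.

Lemma cexp_add (u v : CC) : cexp (Cplus u v) = Cmult (cexp u) (cexp v).
Proof.
  destruct u as [a b], v as [c d]. unfold cexp, Cplus, Cmult, Re, Im. simpl.
  rewrite exp_plus, cos_plus, sin_plus. apply c_eq; simpl; ring.
Qed.

Lemma Cmod_cexp (u : CC) : Cmod (cexp u) = exp (fst u).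
Proof.
  unfold Cmod, cexp, Re, Im. cbn [fst snd].
  pose proof (sin2_cos2 (snd u)) as H. unfold Rsqr in H.
  assert (Hs : (exp (fst u) * cos (snd u)) ^ 2 + (exp (fst u) * sin (snd u)) ^ 2 = exp (fst u) ^ 2).
  { transitivity (exp (fst u) ^ 2 * (sin (snd u) * sin (snd u) + cos (snd u) * cos (snd u))).
    - ring.
    - rewrite H; ring. }
  rewrite Hs. apply sqrt_pow2. left; apply exp_pos.
Qed.

Definition E (n : R) (z : CC) : CC := cexp (Cmult (RtoC (2 * PI * n)) (Cmult Ci z)).

Lemma E_xy (n x y : R) : E n (x, y) = (exp (- (2 * PI * n) * y) * cos (2 * PI * n * x), exp (- (2 * PI * n) * y) * sin (2 * PI * n * x)).
Proof.
  unfold E, cexp, Cmult, Ci, RtoC, Re, Im. cbn [fst snd].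
  replace (2 * PI * n * (0 * x - 1 * y) - 0 * (0 * y + 1 * x)) with (- (2 * PI * n) * y) by ring.
  replace (2 * PI * n * (0 * y + 1 * x) + 0 * (0 * x - 1 * y)) with (2 * PI * n * x) by ring.
  reflexivity.
Qed.

Lemma E_add (n m : R) (z : CC) : Cmult (E n z) (E m z) = E (n + m) z.
Proof.
  destruct z as [x y]. rewrite !E_xy. apply c_eq; simpl.
  - replace (- (2 * PI * (n + m)) * y) with (- (2 * PI * n) * y + - (2 * PI * m) * y) by ring.
    replace (2 * PI * (n + m) * x) with (2 * PI * n * x + 2 * PI * m * x) by ring.
    rewrite exp_plus, cos_plus. ring.
  - replace (- (2 * PI * (n + m)) * y) with (- (2 * PI * n) * y + - (2 * PI * m) * y) by ring.
    replace (2 * PI * (n + m) * x) with (2 * PI * n * x + 2 * PI * m * x) by ring.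
    rewrite exp_plus, sin_plus. ring.
Qed.

Definition beta (a : nat -> CC) (tau : CC) (t : R) (m : nat) : CC :=
  Cmult (a m) (cexp (Cmult (Cmult Ci (RtoC (PI * t * cm m))) tau)).

Lemma Cmod_beta a tau t m : Cmod (beta a tau t m) = Cmod (a m) * exp (- (PI * t * cm m) * Im tau).
Proof.
  unfold beta. rewrite Cmod_mult, Cmod_cexp. f_equal. f_equal.
  destruct tau as [t1 t2]. unfold Cmult, Ci, RtoC, Im. cbn [fst snd]. ring.
Qed.

Lemma term_le_sum (u : nat -> R) : (forall n, 0 <= u n) -> forall N n, (n <= N)%nat -> u n <= sum_f_R0 u N.
Proof.
  intros Hp N. induction N; intros n Hn.
  - assert (n = 0%nat) by lia. subst. simpl. lra.
  - simpl. destruct (Nat.eq_dec n (S N)) as [->|Hne].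
    + pose proof (cond_pos_sum u N Hp). lra.
    + assert (n <= N)%nat by lia. specialize (IHN n H). specialize (Hp (S N)). lra.
Qed.

Lemma lim_bounded (u : nat -> R) : (forall n, 0 <= u n) -> is_lim_seq u 0 -> exists B, 0 <= B /\ forall n, u n <= B.
Proof.
  intros Hp Hl. apply is_lim_seq_Reals in Hl. destruct (Hl 1 Rlt_0_1) as [N0 HN0].
  exists (1 + sum_f_R0 u N0). split.
  - pose proof (cond_pos_sum u N0 Hp). lra.
  - intro n. destruct (Compare_dec.le_lt_dec N0 n) as [H|H].
    + specialize (HN0 n H). unfold Rdist in HN0. rewrite Rminus_0_r, Rabs_pos_eq in HN0 by auto.
      pose proof (cond_pos_sum u N0 Hp). lra.
    + assert (u n <= sum_f_R0 u N0) by (apply term_le_sum; auto; lia).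
      lra.
Qed.

Lemma poly_exp (m : R) (N : nat) : 0 <= m -> (1 + m ^ 2) ^ N <= exp (INR N * (2 * m)).
Proof.
  intro Hm. rewrite exp_INR_mult. apply pow_incr. split.
  - nra.
  - replace (2 * m) with (m + m) by ring. rewrite exp_plus.
    pose proof (exp_ineq1_le m). nra.
Qed.

Lemma quad_bound (c b k : R) : 0 < c -> b * k - c * k ^ 2 <= b ^ 2 / (4 * c).
Proof.
  intro Hc. apply (Rmult_le_reg_l (4 * c)); [lra|].
  replace (4 * c * (b ^ 2 / (4 * c))) with (b ^ 2) by (field; lra).
  assert (0 <= (2 * c * k - b) ^ 2) by (apply pow2_ge_0). nra.
Qed.

Lemma beta_dom a tau t : 0 < Im tau -> 0 < t -> ad_inv_distribution a ->
  forall R, 0 <= R -> ex_series (fun m => Cmod (beta a tau t m) * exp (2 * PI * (INR m + 1) * R)).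
Proof.
  intros Ht2 Ht [N HN] R HR.
  assert (Hpos : forall m, 0 < (1 + INR m ^ 2) ^ N).
  { intro m. apply pow_lt. pose proof (pow2_ge_0 (INR m)); lra. }
  destruct (lim_bounded _ (fun m => Rdiv_le_0_compat _ _ (Cmod_ge_0 _) (Hpos m)) HN) as [B [HB0 HB]].
  set (c := PI * t * Im tau / 2).
  assert (Hc : 0 < c) by (unfold c; pose proof PI_RGT_0; apply Rmult_lt_0_compat; [|lra]; apply Rmult_lt_0_compat; [apply Rmult_lt_0_compat|]; lra).
  set (b := 2 * INR N + 2 * PI * R + 1).
  set (K := B * exp (b ^ 2 / (4 * c) + c + 1)).
  apply (ex_series_le_R _ (fun m => K * exp (-1) ^ m)).
  2:{ apply ex_series_scal_R. apply ex_series_geom. rewrite Rabs_pos_eq by (left; apply exp_pos).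
      rewrite <- exp_0. apply exp_increasing. lra. }
  intro m. rewrite Rabs_pos_eq by (apply Rmult_le_pos; [apply Cmod_ge_0| left; apply exp_pos]).
  rewrite Cmod_beta.
  assert (Ha : Cmod (a m) <= B * (1 + INR m ^ 2) ^ N).
  { specialize (HB m). simpl in HB. pose proof (pow_lt (1 + INR m ^ 2) N ltac:(pose proof (pow2_ge_0 (INR m)); lra)).
    apply (Rmult_le_compat_r ((1 + INR m ^ 2) ^ N)) in HB; [|lra].
    unfold Rdiv in HB. rewrite Rmult_assoc, Rinv_l, Rmult_1_r in HB; lra. }
  pose proof (poly_exp (INR m) N (pos_INR m)) as Hp.
  assert (Ha2 : Cmod (a m) <= B * exp (INR N * (2 * INR m))).
  { eapply Rle_trans; [exact Ha|]. apply Rmult_le_compat_l; auto. }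
  rewrite <- exp_INR_mult.
  apply Rle_trans with (B * exp (INR N * (2 * INR m)) * exp (- (PI * t * cm m) * Im tau) * exp (2 * PI * (INR m + 1) * R)).
  { apply Rmult_le_compat_r; [left; apply exp_pos|]. apply Rmult_le_compat_r; [left; apply exp_pos|]. auto. }
  unfold K. rewrite !Rmult_assoc. apply Rmult_le_compat_l; auto.
  rewrite <- !exp_plus. left; apply exp_increasing.
  pose proof (quad_bound c b (INR m + 1) Hc) as Hq.
  replace (- (PI * t * cm m) * Im tau) with (- c * ((INR m + 1) ^ 2 - 1)) by (unfold c, cm; field).
  assert (0 <= INR N * 2 * INR m) by (pose proof (pos_INR N); pose proof (pos_INR m); nra).
  assert (0 <= b ^ 2 / (4 * c)) by (apply Rdiv_le_0_compat; [apply pow2_ge_0| lra]).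
  unfold b in *.
  replace (- (PI * (t * cm m)) * Im tau) with (- c * ((INR m + 1) ^ 2 - 1)) by (unfold c, cm; field).
  pose proof (pos_INR N). nra.
Qed.

Definition CS (f : nat -> CC) : CC := (Series (fun m => Re (f m)), Series (fun m => Im (f m))).

Lemma CS_ext f g : (forall m, f m = g m) -> CS f = CS g.
Proof. intro H. unfold CS. f_equal; apply Series_ext; intro; rewrite H; auto. Qed.

Lemma abs_re f : ex_series (fun m => Cmod (f m)) -> ex_series (fun m => Re (f m)).
Proof. intro H. apply (ex_series_le_R _ _ (fun m => re_le_Cmod' (f m)) H). Qed.
Lemma abs_im f : ex_series (fun m => Cmod (f m)) -> ex_series (fun m => Im (f m)).
Proof. intro H. apply (ex_series_le_R _ _ (fun m => im_le_Cmod' (f m)) H). Qed.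

Lemma CS_mult_r f c : ex_series (fun m => Cmod (f m)) -> Cmult (CS f) c = CS (fun m => Cmult (f m) c).
Proof.
  intro H. pose proof (abs_re f H). pose proof (abs_im f H). destruct c as [c1 c2].
  unfold CS, Cmult. apply c_eq; cbn [fst snd]; unfold Re, Im in *; cbn [fst snd].
  - rewrite Series_minus.
    + rewrite !Series_scal_r. reflexivity.
    + apply ex_series_scal_r; auto.
    + apply ex_series_scal_r; auto.
  - rewrite Series_plus.
    + rewrite !Series_scal_r. reflexivity.
    + apply ex_series_scal_r; auto.
    + apply ex_series_scal_r; auto.
Qed.

Lemma sigma_E (z : CC) : Defs.sigma z = Cminus (E 1 z) (E (-1) z).
Proof. unfold Defs.sigma, E. f_equal; f_equal; f_equal; f_equal; ring. Qed.

Lemma tele (z : CC) (p : R) (m : nat) :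
  Cmult (sum_n (fun k => E (p - 2 * INR k) z) m) (Cminus (E 1 z) (E (-1) z)) =
  Cminus (E (p + 1) z) (E (p - 2 * INR m - 1) z).
Proof.
  induction m.
  - rewrite sum_O. simpl INR.
    transitivity (Cminus (Cmult (E (p - 2 * 0) z) (E 1 z)) (Cmult (E (p - 2 * 0) z) (E (-1) z))).
    { ring. }
    rewrite !E_add. f_equal; f_equal; ring.
  - rewrite sum_Sn. change plus with Cplus.
    transitivity (Cplus (Cmult (sum_n (fun k => E (p - 2 * INR k) z) m) (Cminus (E 1 z) (E (-1) z)))
      (Cminus (Cmult (E (p - 2 * INR (S m)) z) (E 1 z)) (Cmult (E (p - 2 * INR (S m)) z) (E (-1) z)))).
    { ring. }
    rewrite IHm, !E_add. rewrite S_INR.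
    replace (p - 2 * (INR m + 1) + 1) with (p - 2 * INR m - 1) by ring.
    replace (p - 2 * (INR m + 1) + -1) with (p - 2 * (INR m + 1) - 1) by ring. ring.
Qed.

Definition T (a : nat -> CC) (tau : CC) (t : R) (z : CC) (m : nat) : CC :=
  Cmult (beta a tau t m) (Cminus (E (INR m + 1) z) (E (- (INR m + 1)) z)).

Lemma heat_sigma a tau t z m : Cmult (heat_term a tau t z m) (Defs.sigma z) = T a tau t z m.
Proof.
  unfold heat_term, T. rewrite sigma_E.
  change (chi_d m z) with (sum_n (fun k => E (INR m - 2 * INR k) z) m).
  rewrite <- Cmult_assoc, tele. f_equal. f_equal; f_equal; ring.
Qed.

Lemma Cmod_sum_n (f : nat -> CC) (m : nat) : Cmod (sum_n f m) <= sum_f_R0 (fun k => Cmod (f k)) m.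
Proof.
  induction m.
  - rewrite sum_O. simpl. lra.
  - rewrite sum_Sn. change plus with Cplus. simpl sum_f_R0.
    eapply Rle_trans; [apply Cmod_triangle|]. lra.
Qed.

Lemma Cmod_E (n : R) (z : CC) : Cmod (E n z) = exp (- (2 * PI * n) * Im z).
Proof.
  destruct z as [x y]. unfold E. rewrite Cmod_cexp. f_equal. unfold Cmult, Ci, RtoC, Im. cbn [fst snd]. ring.
Qed.

Lemma PI_gt_3 : 3 < PI.
Proof. pose proof PI2_3_2. lra. Qed.

Lemma exp_le (x y : R) : x <= y -> exp x <= exp y.
Proof. intros [H|H]; [left; apply exp_increasing; auto| subst; lra]. Qed.

Lemma Cmod_E_le (n : R) (z : CC) : Cmod (E n z) <= exp (2 * PI * Rabs n * Rabs (Im z)).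
Proof.
  rewrite Cmod_E. apply exp_le. pose proof PI_RGT_0.
  assert (- n * Im z <= Rabs n * Rabs (Im z)).
  { rewrite <- Rabs_mult. rewrite <- (Rabs_Ropp (n * Im z)).
    replace (- n * Im z) with (- (n * Im z)) by ring. apply Rle_abs. }
  nra.
Qed.

Lemma chi_bound m z : Cmod (chi_d m z) <= exp (2 * PI * (INR m + 1) * (Rabs (Im z) + 1)).
Proof.
  change (chi_d m z) with (sum_n (fun k => E (INR m - 2 * INR k) z) m).
  eapply Rle_trans; [apply Cmod_sum_n|].
  pose proof PI_RGT_0 as Hpi.
  apply Rle_trans with (sum_f_R0 (fun _ => exp (2 * PI * INR m * Rabs (Im z))) m).
  - apply sum_Rle. intros k Hk. eapply Rle_trans; [apply Cmod_E_le|]. apply exp_le.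
    assert (Rabs (INR m - 2 * INR k) <= INR m).
    { apply Rabs_le. apply le_INR in Hk. pose proof (pos_INR k). lra. }
    pose proof (Rabs_pos (Im z)). apply Rmult_le_compat_r; [auto|]. apply Rmult_le_compat_l; [lra| auto].
  - rewrite sum_cte. 
    replace (2 * PI * (INR m + 1) * (Rabs (Im z) + 1)) with (2 * PI * INR m * Rabs (Im z) + (2 * PI * (INR m + 1) * Rabs (Im z) - 2 * PI * INR m * Rabs (Im z) + 2 * PI * (INR m + 1))) by ring.
    rewrite exp_plus. apply Rmult_le_compat_l; [left; apply exp_pos|].
    rewrite S_INR. eapply Rle_trans; [|apply exp_ineq1_le].
    pose proof (Rabs_pos (Im z)). pose proof (pos_INR m). pose proof PI_gt_3. nra.
Qed.

Definition bdom (a : nat -> CC) (tau : CC) (t : R) := forall R, 0 <= R ->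
  ex_series (fun m => Cmod (beta a tau t m) * exp (2 * PI * (INR m + 1) * R)).

Lemma heat_abs a tau t z : bdom a tau t -> ex_series (fun m => Cmod (heat_term a tau t z m)).
Proof.
  intro Hd.
  apply (ex_series_le_R _ (fun m => Cmod (beta a tau t m) * exp (2 * PI * (INR m + 1) * (Rabs (Im z) + 1)))).
  - intro m. rewrite Rabs_pos_eq by apply Cmod_ge_0. unfold heat_term. rewrite Cmod_mult.
    apply Rmult_le_compat_l; [apply Cmod_ge_0| apply chi_bound].
  - apply Hd. pose proof (Rabs_pos (Im z)). lra.
Qed.

Lemma heat_sigma_CS a tau t z : bdom a tau t ->
  Cmult (heat_op a tau t z) (Defs.sigma z) = CS (T a tau t z).
Proof.
  intro Hd. change (heat_op a tau t z) with (CS (heat_term a tau t z)).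
  rewrite CS_mult_r by (apply heat_abs; auto). apply CS_ext. intro m. apply heat_sigma.
Qed.

Definition nn (j : nat) : R := if Nat.even j then INR (Nat.div2 j) + 1 else - (INR (Nat.div2 j) + 1).
Definition gam (a : nat -> CC) (tau : CC) (t : R) (j : nat) : CC :=
  if Nat.even j then beta a tau t (Nat.div2 j) else Copp (beta a tau t (Nat.div2 j)).
Definition Gs (a : nat -> CC) (tau : CC) (t : R) (z : CC) : CC :=
  CS (fun j => Cmult (gam a tau t j) (E (nn j) z)).

Lemma even_2m m : Nat.even (2 * m) = true.
Proof. apply Nat.even_even. Qed.
Lemma even_S2m m : Nat.even (S (2 * m)) = false.
Proof. rewrite Nat.even_succ, <- Nat.negb_even, Nat.even_even. reflexivity. Qed.

Lemma nn_2m m : nn (2 * m) = INR m + 1.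
Proof. unfold nn. rewrite even_2m, Nat.div2_double. reflexivity. Qed.
Lemma nn_S2m m : nn (S (2 * m)) = - (INR m + 1).
Proof. unfold nn. rewrite even_S2m, Nat.div2_succ_double. reflexivity. Qed.
Lemma gam_2m a tau t m : gam a tau t (2 * m) = beta a tau t m.
Proof. unfold gam. rewrite even_2m, Nat.div2_double. reflexivity. Qed.
Lemma gam_S2m a tau t m : gam a tau t (S (2 * m)) = Copp (beta a tau t m).
Proof. unfold gam. rewrite even_S2m, Nat.div2_succ_double. reflexivity. Qed.

Lemma Rabs_nn j : Rabs (nn j) = INR (Nat.div2 j) + 1.
Proof.
  pose proof (pos_INR (Nat.div2 j)). unfold nn. destruct (Nat.even j).
  - apply Rabs_pos_eq. lra.
  - rewrite Rabs_Ropp. apply Rabs_pos_eq. lra.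
Qed.
Lemma Cmod_gam a tau t j : Cmod (gam a tau t j) = Cmod (beta a tau t (Nat.div2 j)).
Proof. unfold gam. destruct (Nat.even j); [reflexivity| apply Cmod_opp]. Qed.

Lemma sum_mono (u : nat -> R) : (forall n, 0 <= u n) -> forall N M, (N <= M)%nat -> sum_f_R0 u N <= sum_f_R0 u M.
Proof.
  intros Hp N M H. induction H; [lra|]. simpl. specialize (Hp (S m)). lra.
Qed.

Lemma sum_unblock (h : nat -> R) N : sum_f_R0 (fun j => h (Nat.div2 j)) (S (2 * N)) = 2 * sum_f_R0 h N.
Proof.
  induction N.
  - simpl. ring.
  - replace (S (2 * S N)) with (S (S (S (2 * N)))) by lia.
    change (sum_f_R0 (fun j => h (Nat.div2 j)) (S (S (S (2 * N))))) with
      (sum_f_R0 (fun j => h (Nat.div2 j)) (S (2 * N)) + h (Nat.div2 (S (S (2 * N)))) + h (Nat.div2 (S (S (S (2 * N)))))).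
    rewrite IHN.
    assert (E1 : Nat.div2 (S (S (2*N))) = S N).
    { change (Nat.div2 (S (S (2*N)))) with (S (Nat.div2 (2*N))); rewrite Nat.div2_double; reflexivity. }
    assert (E2 : Nat.div2 (S (S (S (2*N)))) = S N).
    { change (Nat.div2 (S (S (S (2*N))))) with (S (Nat.div2 (S (2*N)))); rewrite Nat.div2_succ_double; reflexivity. }
    rewrite E1, E2. change (sum_f_R0 h (S N)) with (sum_f_R0 h N + h (S N)). ring.
Qed.

Lemma ex_series_unblock (h : nat -> R) : (forall m, 0 <= h m) -> ex_series h -> ex_series (fun j => h (Nat.div2 j)).
Proof.
  intros Hp He. apply (ex_series_pos_bound _ (2 * Series h)); [intro; apply Hp|].
  intro N. apply Rle_trans with (sum_f_R0 (fun j => h (Nat.div2 j)) (S (2 * N))).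
  - apply sum_mono; [intro; apply Hp| lia].
  - rewrite sum_unblock. pose proof (partial_le_Series h Hp He N). lra.
Qed.

Lemma sum_block (f : nat -> R) n : sum_f_R0 (fun m => f (2 * m)%nat + f (S (2 * m))) n = sum_f_R0 f (S (2 * n)).
Proof.
  induction n.
  - simpl. ring.
  - change (sum_f_R0 (fun m => f (2 * m)%nat + f (S (2 * m))) (S n)) with
      (sum_f_R0 (fun m => f (2 * m)%nat + f (S (2 * m))) n + (f (2 * S n)%nat + f (S (2 * S n)))).
    rewrite IHn. replace (S (2 * S n)) with (S (S (S (2 * n)))) by lia.
    replace (2 * S n)%nat with (S (S (2 * n))) by lia. simpl. ring.
Qed.

Lemma series_block (f : nat -> R) : ex_series f -> Series (fun m => f (2 * m)%nat + f (S (2 * m))) = Series f.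
Proof.
  intro He. apply is_series_unique. apply is_series_Reals.
  pose proof (Series_Un_cv f He) as Hc. intros eps Heps. destruct (Hc eps Heps) as [N0 HN0].
  exists N0. intros n Hn. rewrite sum_block. apply HN0. lia.
Qed.

Definition om (j : nat) : R := - (2 * PI * nn j).

Lemma gdom a tau t x y0 : bdom a tau t -> forall R, 0 <= R ->
  ex_series (fun j => Cmod (Cmult (gam a tau t j) (E (nn j) (x, y0))) * exp (Rabs (om j) * R)).
Proof.
  intros Hd R HR. pose proof PI_RGT_0 as Hpi.
  set (h := fun m => Cmod (beta a tau t m) * exp (2 * PI * (INR m + 1) * (R + Rabs y0))).
  apply (ex_series_le_R _ (fun j => h (Nat.div2 j))).
  2:{ apply ex_series_unblock.
      - intro m. unfold h. apply Rmult_le_pos; [apply Cmod_ge_0| left; apply exp_pos].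
      - apply Hd. pose proof (Rabs_pos y0). lra. }
  intro j. rewrite Rabs_pos_eq by (apply Rmult_le_pos; [apply Cmod_ge_0| left; apply exp_pos]).
  rewrite Cmod_mult, Cmod_gam, Cmod_E. unfold h. rewrite Rmult_assoc. apply Rmult_le_compat_l; [apply Cmod_ge_0|].
  rewrite <- exp_plus. apply exp_le. unfold om. rewrite Rabs_Ropp, Rabs_mult, Rabs_mult, (Rabs_pos_eq 2), (Rabs_pos_eq PI), Rabs_nn by lra.
  simpl Im. assert (- (2 * PI * nn j) * y0 <= 2 * PI * (INR (Nat.div2 j) + 1) * Rabs y0).
  { rewrite <- Rabs_nn. assert (- (nn j * y0) <= Rabs (nn j) * Rabs y0).
    { rewrite <- Rabs_mult, <- Rabs_Ropp. apply Rle_abs. }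
    nra. }
  lra.
Qed.

Lemma gabs a tau t x y0 : bdom a tau t ->
  ex_series (fun j => Cmod (Cmult (gam a tau t j) (E (nn j) (x, y0)))).
Proof.
  intro Hd. apply (ex_series_ext_R (fun j => Cmod (Cmult (gam a tau t j) (E (nn j) (x, y0))) * exp (Rabs (om j) * 0))).
  - intro j. rewrite Rmult_0_r, exp_0. ring.
  - apply gdom; auto. lra.
Qed.

Lemma CS_T_Gs a tau t z : bdom a tau t -> CS (T a tau t z) = Gs a tau t z.
Proof.
  intro Hd. destruct z as [x y]. unfold Gs, CS.
  pose proof (gabs a tau t x y Hd) as Hab.
  assert (HT : forall m, T a tau t (x, y) m = Cplus (Cmult (gam a tau t (2 * m)) (E (nn (2 * m)) (x, y)))
                                     (Cmult (gam a tau t (S (2 * m))) (E (nn (S (2 * m))) (x, y)))).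
  { intro m. rewrite nn_2m, nn_S2m, gam_2m, gam_S2m. unfold T. ring. }
  f_equal.
  - rewrite <- (series_block (fun j => Re (Cmult (gam a tau t j) (E (nn j) (x, y))))) by (apply abs_re; auto).
    apply Series_ext. intro m. rewrite HT. reflexivity.
  - rewrite <- (series_block (fun j => Im (Cmult (gam a tau t j) (E (nn j) (x, y))))) by (apply abs_im; auto).
    apply Series_ext. intro m. rewrite HT. reflexivity.
Qed.

Lemma wd_Gs a tau t z : bdom a tau t ->
  weighted_density a tau t z = Cmod (Gs a tau t z) ^ 2 * exp (- (4 * PI / (t * Im tau)) * Im z ^ 2).
Proof.
  intro Hd. unfold weighted_density. rewrite <- CS_T_Gs, <- heat_sigma_CS, Cmod_mult by auto. ring.
Qed.

Lemma Series_sq_expand (a b : nat -> R) : ex_series a -> ex_series b ->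
  Series a ^ 2 + Series b ^ 2 = Series (fun j => Series (fun j' => a j * a j' + b j * b j')).
Proof.
  intros Ha Hb.
  rewrite (Series_ext (fun j => Series (fun j' => a j * a j' + b j * b j')) (fun j => a j * Series a + b j * Series b)).
  2:{ intro j. rewrite Series_plus by (apply ex_series_scal_R; auto). rewrite !Series_scal_l. reflexivity. }
  rewrite Series_plus by (apply ex_series_scal_r; auto). rewrite (Series_scal_r (Series a) a), (Series_scal_r (Series b) b). ring.
Qed.

Lemma modsq_expand (h : nat -> CC) : ex_series (fun j => Cmod (h j)) ->
  Cmod (CS h) ^ 2 = Series (fun j => Series (fun j' => Re (Cmult (h j) (Cconj (h j'))))).
Proof.
  intro H. rewrite Cmod_sq. unfold CS. cbn [fst snd].
  rewrite Series_sq_expand by (first [apply abs_re| apply abs_im]; auto).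
  apply Series_ext; intro j; apply Series_ext; intro j'.
  destruct (h j) as [p q], (h j') as [p' q']. unfold Re, Im, Cmult, Cconj. cbn [fst snd]. ring.
Qed.

Definition dd (c : R) (g : nat -> CC) (j j' : nat) : R := c * Re (Cmult (g j) (Cconj (g j'))).
Definition ww (s : R) (om : nat -> R) (j j' : nat) : R := om j + om j' + s.
Definition gdomP (g : nat -> CC) (om : nat -> R) := forall R, 0 <= R ->
  ex_series (fun j => Cmod (g j) * exp (Rabs (om j) * R)).

Lemma gdomP_abs g om : gdomP g om -> ex_series (fun j => Cmod (g j)).
Proof.
  intro H. apply (ex_series_ext_R (fun j => Cmod (g j) * exp (Rabs (om j) * 0))).
  - intro j. rewrite Rmult_0_r, exp_0. ring.
  - apply H. lra.
Qed.

Lemma ES_repr c s g om y : gdomP g om ->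
  ES2 (dd c g) (ww s om) y = c * exp (s * y) * Cmod (CS (fun j => Cmult (g j) (RtoC (exp (om j * y))))) ^ 2.
Proof.
  intro Hg. rewrite modsq_expand.
  2:{ apply (ex_series_le_R _ (fun j => Cmod (g j) * exp (Rabs (om j) * Rabs y))).
      - intro j. rewrite Rabs_pos_eq by apply Cmod_ge_0. rewrite Cmod_mult, Cmod_R, Rabs_pos_eq by (left; apply exp_pos).
        apply Rmult_le_compat_l; [apply Cmod_ge_0|]. apply exp_le. rewrite <- Rabs_mult. apply Rle_abs.
      - apply Hg, Rabs_pos. }
  unfold ES2. rewrite <- Series_scal_l. apply Series_ext; intro j.
  rewrite <- Series_scal_l. apply Series_ext; intro j'. unfold dd, ww.
  destruct (g j) as [p q], (g j') as [p' q']. unfold Re, Cmult, Cconj, RtoC. cbn [fst snd].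
  rewrite !Rmult_plus_distr_r, !exp_plus. ring.
Qed.

Lemma dom_repr c s g om : gdomP g om -> dom2 (dd c g) (ww s om).
Proof.
  intros Hg R HR. specialize (Hg R HR) as HG.
  set (G := fun j => Cmod (g j) * exp (Rabs (om j) * R)).
  set (K := Rabs c * exp (Rabs s * R)).
  assert (HK : 0 <= K) by (unfold K; apply Rmult_le_pos; [apply Rabs_pos| left; apply exp_pos]).
  assert (HG0 : forall j, 0 <= G j) by (intro; unfold G; apply Rmult_le_pos; [apply Cmod_ge_0| left; apply exp_pos]).
  assert (Hb : forall j j', Rabs (dd c g j j') * exp (Rabs (ww s om j j') * R) <= K * G j * G j').
  { intros j j'. unfold dd, ww, K, G.
    assert (H1 : Rabs (Re (Cmult (g j) (Cconj (g j')))) <= Cmod (g j) * Cmod (g j')).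
    { eapply Rle_trans; [apply re_le_Cmod|]. rewrite Cmod_mult, Cmod_conj. lra. }
    assert (H2 : exp (Rabs (om j + om j' + s) * R) <= exp (Rabs s * R) * exp (Rabs (om j) * R) * exp (Rabs (om j') * R)).
    { rewrite <- !exp_plus. apply exp_le.
      pose proof (Rabs_triang (om j + om j') s). pose proof (Rabs_triang (om j) (om j')). nra. }
    rewrite Rabs_mult.
    apply Rle_trans with (Rabs c * (Cmod (g j) * Cmod (g j')) * (exp (Rabs s * R) * exp (Rabs (om j) * R) * exp (Rabs (om j') * R))).
    - apply Rmult_le_compat; [apply Rmult_le_pos; apply Rabs_pos| left; apply exp_pos| |auto].
      apply Rmult_le_compat_l; [apply Rabs_pos| auto].
    - right; ring. }
  assert (Hin : forall j, ex_series (fun j' => Rabs (dd c g j j') * exp (Rabs (ww s om j j') * R))).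
  { intro j. apply (ex_series_le_R _ (fun j' => K * G j * G j')).
    - intro j'. rewrite Rabs_pos_eq; [apply Hb|]. apply Rmult_le_pos; [apply Rabs_pos| left; apply exp_pos].
    - apply ex_series_scal_R. exact HG. }
  split; auto.
  apply (ex_series_le_R _ (fun j => K * G j * Series G)).
  - intro j. rewrite Rabs_pos_eq.
    + rewrite <- Series_scal_l. apply Series_le; [|apply ex_series_scal_R; exact HG].
      intro j'. split; [apply Rmult_le_pos; [apply Rabs_pos| left; apply exp_pos]| apply Hb].
    + apply Series_nonneg; auto. intro; apply Rmult_le_pos; [apply Rabs_pos| left; apply exp_pos].
  - apply ex_series_scal_r. apply ex_series_scal_R. exact HG.
Qed.

Lemma EC_half c s g om : gdomP g om -> (forall j, sin (om j * (1/2)) = 0) ->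
  EC2 (dd c g) (ww s om) (1/2) = c * cos (s * (1/2)) * Cmod (CS (fun j => Cmult (g j) (RtoC (cos (om j * (1/2)))))) ^ 2.
Proof.
  intros Hg Hs. rewrite modsq_expand.
  2:{ apply (ex_series_le_R _ (fun j => Cmod (g j))); [|eapply gdomP_abs; eauto].
      intro j. rewrite Rabs_pos_eq by apply Cmod_ge_0. rewrite Cmod_mult, Cmod_R.
      pose proof (COS_bound (om j * (1/2))) as [Hc1 Hc2]. pose proof (Cmod_ge_0 (g j)).
      assert (Rabs (cos (om j * (1/2))) <= 1) by (apply Rabs_le; lra). nra. }
  unfold EC2. rewrite <- Series_scal_l. apply Series_ext; intro j.
  rewrite <- Series_scal_l. apply Series_ext; intro j'. unfold dd, ww.
  replace ((om j + om j' + s) * (1 / 2)) with (om j * (1/2) + om j' * (1/2) + s * (1/2)) by ring.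
  rewrite cos_plus, cos_plus, sin_plus, (Hs j), (Hs j').
  destruct (g j) as [p q], (g j') as [p' q']. unfold Re, Cmult, Cconj, RtoC. cbn [fst snd]. ring.
Qed.

Lemma E_y n x y0 y : Cmult (E n (x, y0)) (RtoC (exp (- (2 * PI * n) * y))) = E n (x, y0 + y).
Proof.
  rewrite !E_xy. unfold Cmult, RtoC. apply c_eq; cbn [fst snd];
  rewrite Rmult_plus_distr_l, exp_plus; ring.
Qed.

Lemma E_half n x y : sin (- (2 * PI * n) * (1/2)) = 0 ->
  Cmult (E n (x, y)) (RtoC (cos (- (2 * PI * n) * (1/2)))) = E n (x + 1/2, y).
Proof.
  intro Hs. rewrite !E_xy. unfold Cmult, RtoC.
  replace (2 * PI * n * (x + 1/2)) with (2 * PI * n * x - (- (2 * PI * n) * (1/2))) by ring.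
  rewrite cos_minus, sin_minus, Hs. apply c_eq; cbn [fst snd]; ring.
Qed.

Lemma sin_PI_INR (n : nat) : sin (PI * INR n) = 0.
Proof.
  apply sin_eq_0_1. exists (Z.of_nat n). rewrite <- INR_IZR_INZ. ring.
Qed.

Lemma sin_om j : sin (om j * (1/2)) = 0.
Proof.
  unfold om, nn. destruct (Nat.even j).
  - replace (- (2 * PI * (INR (Nat.div2 j) + 1)) * (1 / 2)) with (- (PI * INR (S (Nat.div2 j)))) by (rewrite S_INR; field).
    rewrite sin_neg, sin_PI_INR. ring.
  - replace (- (2 * PI * - (INR (Nat.div2 j) + 1)) * (1 / 2)) with (PI * INR (S (Nat.div2 j))) by (rewrite S_INR; field).
    apply sin_PI_INR.
Qed.

Lemma key a tau t : 0 < Im tau -> 0 < t -> bdom a tau t ->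
  (forall z : CC, weighted_density a tau t (Cplus z tau) = weighted_density a tau t z) ->
  forall x, Cmod (Gs a tau t (x + 1/2, 0)) ^ 2 * cos (4 * PI / t) = Cmod (Gs a tau t (x + 1/2, 0)) ^ 2.
Proof.
  intros Ht2 Ht Hd Hyp x. destruct tau as [t1 t2]. unfold Im in Ht2. cbn [snd] in Ht2.
  set (kap := 4 * PI / (t * t2)).
  set (gL := fun j => Cmult (gam a (t1, t2) t j) (E (nn j) (x + t1, t2))).
  set (gR := fun j => Cmult (gam a (t1, t2) t j) (E (nn j) (x, 0))).
  set (cL := exp (- kap * t2 ^ 2)).
  set (sL := - (8 * PI / t)).
  assert (HgL : gdomP gL om) by (intros R HR; apply gdom; auto).
  assert (HgR : gdomP gR om) by (intros R HR; apply gdom; auto).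
  assert (Hexp : forall y, cL * exp (sL * y) * exp (- kap * y ^ 2) = exp (- kap * (y + t2) ^ 2)).
  { intro y. unfold cL, sL. rewrite <- !exp_plus. f_equal. unfold kap. field. lra. }
  assert (Hwd : forall p y, Cmod (Gs a (t1, t2) t (p + t1, y + t2)) ^ 2 * exp (- kap * (y + t2) ^ 2) =
                            Cmod (Gs a (t1, t2) t (p, y)) ^ 2 * exp (- kap * y ^ 2)).
  { intros p y. specialize (Hyp (p, y)). rewrite !wd_Gs in Hyp by auto.
    unfold Cplus in Hyp. cbn [fst snd] in Hyp. unfold Im in Hyp. cbn [snd] in Hyp. exact Hyp. }
  assert (HES : forall y, ES2 (dd cL gL) (ww sL om) y = ES2 (dd 1 gR) (ww 0 om) y).
  { intro y. rewrite !ES_repr by auto.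
    rewrite (CS_ext _ (fun j => Cmult (gam a (t1, t2) t j) (E (nn j) (x + t1, y + t2)))).
    2:{ intro j. unfold gL, om. rewrite <- Cmult_assoc, E_y. do 3 f_equal. ring. }
    rewrite (CS_ext (fun j => Cmult (gR j) (RtoC (exp (om j * y)))) (fun j => Cmult (gam a (t1, t2) t j) (E (nn j) (x, y)))).
    2:{ intro j. unfold gR, om. rewrite <- Cmult_assoc, E_y. do 3 f_equal. ring. }
    fold (Gs a (t1, t2) t (x + t1, y + t2)). fold (Gs a (t1, t2) t (x, y)).
    apply (Rmult_eq_reg_r (exp (- kap * y ^ 2))); [|apply Rgt_not_eq, exp_pos].
    rewrite Rmult_0_l, exp_0, Rmult_1_l.
    transitivity (Cmod (Gs a (t1, t2) t (x + t1, y + t2)) ^ 2 * (cL * exp (sL * y) * exp (- kap * y ^ 2))).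
    { ring. }
    rewrite Hexp, Hwd. ring. }
  pose proof (claim _ _ _ _ (dom_repr cL sL gL om HgL) (dom_repr 1 0 gR om HgR) HES (1/2)) as HEC.
  rewrite !EC_half in HEC by (auto; apply sin_om).
  rewrite (CS_ext _ (fun j => Cmult (gam a (t1, t2) t j) (E (nn j) (x + 1/2 + t1, 0 + t2)))) in HEC.
  2:{ intro j. unfold gL, om. rewrite <- Cmult_assoc, E_half by apply sin_om.
      do 3 f_equal; ring. }
  rewrite (CS_ext (fun j => Cmult (gR j) (RtoC (cos (om j * (1/2))))) (fun j => Cmult (gam a (t1, t2) t j) (E (nn j) (x + 1/2, 0)))) in HEC.
  2:{ intro j. unfold gR, om. rewrite <- Cmult_assoc, E_half by apply sin_om. reflexivity. }
  fold (Gs a (t1, t2) t (x + 1/2 + t1, 0 + t2)) in HEC. fold (Gs a (t1, t2) t (x + 1/2, 0)) in HEC.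
  pose proof (Hwd (x + 1/2) 0) as H0.
  replace (- kap * 0 ^ 2) with 0 in H0 by ring. rewrite exp_0, Rmult_1_r in H0.
  replace (0 + t2) with t2 in * by ring.
  replace (- kap * t2 ^ 2) with (- kap * t2 ^ 2) in H0 by ring.
  fold cL in H0.
  replace (sL * (1/2)) with (- (4 * PI / t)) in HEC by (unfold sL; field; lra).
  rewrite cos_neg, Rmult_0_l, cos_0 in HEC.
  rewrite !Rmult_1_l in HEC. rewrite <- H0 in *. nra.
Qed.

Lemma cos_ne_1 t : 0 < t -> ~ (exists n : nat, (0 < n)%nat /\ 2 / t = INR n) -> cos (4 * PI / t) <> 1.
Proof.
  intros Ht Hn Hc. apply Hn.
  replace (4 * PI / t) with (2 * (2 * PI / t)) in Hc by (field; lra).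
  rewrite cos_2a_sin in Hc.
  assert (Hs : sin (2 * PI / t) = 0) by nra.
  apply sin_eq_0_0 in Hs. destruct Hs as [k Hk].
  assert (Hk2 : 2 / t = IZR k).
  { pose proof PI_RGT_0. apply (Rmult_eq_reg_r PI); [|lra]. rewrite <- Hk. field. lra. }
  assert (Hpos : (0 < k)%Z).
  { apply lt_0_IZR. rewrite <- Hk2. apply Rdiv_lt_0_compat; lra. }
  exists (Z.to_nat k). split; [lia|].
  rewrite Hk2, INR_IZR_INZ, Z2Nat.id by lia. reflexivity.
Qed.

(* ---------- Fourier extraction by discrete averaging ---------- *)
Lemma tele_sum (g : nat -> R) n : sum_f_R0 (fun l => g (S l) - g l) n = g (S n) - g O.
Proof. induction n; simpl; [ring|]. rewrite IHn. ring. Qed.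

Lemma cos_sum (M d : nat) : (0 < d)%nat -> (d < M)%nat ->
  sum_f_R0 (fun l => cos (2 * PI * INR d / INR M * INR l)) (pred M) = 0.
Proof.
  intros Hd HM. set (al := 2 * PI * INR d / INR M).
  pose proof PI_RGT_0 as Hpi.
  assert (HM0 : 0 < INR M) by (apply lt_0_INR; lia).
  assert (Hs : 0 < sin (al / 2)).
  { apply sin_gt_0.
    - unfold al. apply Rdiv_lt_0_compat; [|lra]. apply Rdiv_lt_0_compat; auto.
      apply Rmult_lt_0_compat; [lra| apply lt_0_INR; auto].
    - unfold al. apply lt_INR in HM. replace (2 * PI * INR d / INR M / 2) with (PI * (INR d / INR M)) by (field; lra).
      rewrite <- (Rmult_1_r PI) at 2. apply Rmult_lt_compat_l; auto.
      apply (Rmult_lt_reg_r (INR M)); auto. field_simplify; lra. }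
  set (g := fun l : nat => sin (al * (INR l - 1/2))).
  assert (Hterm : forall l, g (S l) - g l = 2 * sin (al / 2) * cos (al * INR l)).
  { intro l. unfold g. rewrite S_INR.
    replace (al * (INR l + 1 - 1/2)) with (al * INR l + al / 2) by field.
    replace (al * (INR l - 1/2)) with (al * INR l - al / 2) by field.
    rewrite sin_plus, sin_minus. ring. }
  assert (Htel : 2 * sin (al / 2) * sum_f_R0 (fun l => cos (al * INR l)) (pred M) = g (S (pred M)) - g O).
  { rewrite <- tele_sum, scal_sum. apply sum_eq. intros l _. rewrite Hterm. ring. }
  assert (Hend : g (S (pred M)) - g O = 0).
  { unfold g. rewrite Nat.succ_pred by lia. simpl INR.
    replace (al * (INR M - 1/2)) with (- (al / 2) + 2 * INR d * PI) by (unfold al; field; lra).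
    rewrite sin_period. replace (al * (0 - 1/2)) with (- (al / 2)) by field. ring. }
  rewrite Hend in Htel.
  apply (Rmult_eq_reg_l (2 * sin (al / 2))); [|lra]. rewrite Htel. ring.
Qed.

Definition Wsum (M K m : nat) : R :=
  sum_f_R0 (fun l => sin (2 * PI * (INR K + 1) * (INR l / INR M)) * sin (2 * PI * (INR m + 1) * (INR l / INR M))) (pred M).

Lemma W_expand M K m : (0 < M)%nat -> Wsum M K m = / 2 *
  (sum_f_R0 (fun l => cos ((INR K - INR m) * (2 * PI / INR M) * INR l)) (pred M) -
   sum_f_R0 (fun l => cos ((INR K + INR m + 2) * (2 * PI / INR M) * INR l)) (pred M)).
Proof.
  intro HM. assert (0 < INR M) by (apply lt_0_INR; auto).
  unfold Wsum. rewrite <- minus_sum, scal_sum. apply sum_eq. intros l _.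
  set (A := 2 * PI * (INR K + 1) * (INR l / INR M)).
  set (B := 2 * PI * (INR m + 1) * (INR l / INR M)).
  replace ((INR K - INR m) * (2 * PI / INR M) * INR l) with (A - B) by (unfold A, B; field; lra).
  replace ((INR K + INR m + 2) * (2 * PI / INR M) * INR l) with (A + B) by (unfold A, B; field; lra).
  rewrite cos_minus, cos_plus. field.
Qed.

Lemma cos_sum' (M d : nat) (x : R) : (0 < d)%nat -> (d < M)%nat -> (x = INR d \/ x = - INR d) ->
  sum_f_R0 (fun l => cos (x * (2 * PI / INR M) * INR l)) (pred M) = 0.
Proof.
  intros Hd HM Hx. assert (0 < INR M) by (apply lt_0_INR; lia).
  rewrite <- (cos_sum M d Hd HM). apply sum_eq. intros l _.
  destruct Hx as [-> | ->].
  - f_equal. field. lra.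
  - replace (- INR d * (2 * PI / INR M) * INR l) with (- (2 * PI * INR d / INR M * INR l)) by (field; lra).
    apply cos_neg.
Qed.

Lemma W_off M K m : m <> K -> (m + K + 2 < M)%nat -> Wsum M K m = 0.
Proof.
  intros Hne HM. rewrite W_expand by lia.
  rewrite (cos_sum' M (K + m + 2) (INR K + INR m + 2)); [| lia| lia| left; rewrite !plus_INR; simpl; ring].
  destruct (Compare_dec.lt_dec m K) as [Hl|Hl].
  - rewrite (cos_sum' M (K - m) (INR K - INR m)); [ring| lia| lia| left; rewrite minus_INR; [ring| lia]].
  - rewrite (cos_sum' M (m - K) (INR K - INR m)); [ring| lia| lia| right; rewrite minus_INR; [ring| lia]].
Qed.

Lemma W_diag M K : (2 * K + 2 < M)%nat -> Wsum M K K = INR M / 2.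
Proof.
  intros HM. rewrite W_expand by lia.
  rewrite (cos_sum' M (K + K + 2) (INR K + INR K + 2)); [| lia| lia| left; rewrite !plus_INR; simpl; ring].
  rewrite (sum_eq _ (fun _ => 1)).
  - rewrite sum_cte, Nat.succ_pred by lia. field.
  - intros l _. replace ((INR K - INR K) * (2 * PI / INR M) * INR l) with 0 by ring. apply cos_0.
Qed.

Lemma W_bound M K m : (0 < M)%nat -> Rabs (Wsum M K m) <= INR M.
Proof.
  intro HM0. unfold Wsum. destruct M as [|M]; [lia|].
  - eapply Rle_trans; [apply sum_f_R0_triangle|]. simpl pred.
    apply Rle_trans with (sum_f_R0 (fun _ => 1) M).
    + apply sum_Rle. intros l _. rewrite Rabs_mult.
      pose proof (SIN_bound (2 * PI * (INR K + 1) * (INR l / INR (S M)))).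
      pose proof (SIN_bound (2 * PI * (INR m + 1) * (INR l / INR (S M)))).
      assert (Rabs (sin (2 * PI * (INR K + 1) * (INR l / INR (S M)))) <= 1) by (apply Rabs_le; lra).
      assert (Rabs (sin (2 * PI * (INR m + 1) * (INR l / INR (S M)))) <= 1) by (apply Rabs_le; lra).
      pose proof (Rabs_pos (sin (2 * PI * (INR K + 1) * (INR l / INR (S M))))).
      pose proof (Rabs_pos (sin (2 * PI * (INR m + 1) * (INR l / INR (S M))))). nra.
    + rewrite sum_cte. lra.
Qed.

Lemma sum_single (f : nat -> R) N K : (K <= N)%nat -> (forall m, (m <= N)%nat -> m <> K -> f m = 0) -> sum_f_R0 f N = f K.
Proof.
  intros HK Hz. induction N.
  - assert (K = O) by lia. subst. reflexivity.
  - simpl. destruct (Nat.eq_dec K (S N)) as [->|Hne].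
    + rewrite (sum_eq_R0 f N); [ring|]. intros n Hn. apply Hz; lia.
    + rewrite IHN; [| lia| intros; apply Hz; lia]. rewrite (Hz (S N)); [ring| lia| lia].
Qed.

Lemma extract (u : nat -> R) : ex_series (fun m => Rabs (u m)) ->
  (forall p, Series (fun m => u m * sin (2 * PI * (INR m + 1) * p)) = 0) -> forall K, u K = 0.
Proof.
  intros Hu Hz K.
  assert (Hex : ex_series u) by (apply ex_series_Rabs; auto).
  assert (Hbound : forall L, Rabs (u K) <= 2 * Series (fun k => Rabs (u (S (K + L) + k)%nat))).
  { intro L. set (M := (2 * K + 3 + L)%nat).
    assert (HM : (0 < M)%nat) by (unfold M; lia).
    assert (HM' : 0 < INR M) by (apply lt_0_INR; auto).
    set (sK := fun l => sin (2 * PI * (INR K + 1) * (INR l / INR M))).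
    set (f := fun l m => sK l * (u m * sin (2 * PI * (INR m + 1) * (INR l / INR M)))).
    assert (H0 : sum_f_R0 (fun l => Series (f l)) (pred M) = 0).
    { rewrite (sum_eq _ (fun _ => 0)).
      - rewrite sum_cte; ring.
      - intros l _. unfold f. rewrite Series_scal_l, Hz. ring. }
    destruct (sum_Series f (pred M)) as [Hs1 Hs2].
    { intro l. apply (ex_series_le_R _ (fun m => Rabs (u m))); auto. intro m. unfold f.
      rewrite !Rabs_mult.
      pose proof (SIN_bound (2 * PI * (INR m + 1) * (INR l / INR M))).
      pose proof (SIN_bound (2 * PI * (INR K + 1) * (INR l / INR M))).
      assert (Rabs (sK l) <= 1) by (unfold sK; apply Rabs_le; lra).
      assert (Rabs (sin (2 * PI * (INR m + 1) * (INR l / INR M))) <= 1) by (apply Rabs_le; lra).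
      pose proof (Rabs_pos (sK l)). pose proof (Rabs_pos (u m)).
      pose proof (Rabs_pos (sin (2 * PI * (INR m + 1) * (INR l / INR M)))).
      apply Rle_trans with (1 * (Rabs (u m) * 1)); [|lra]. apply Rmult_le_compat; auto; [apply Rmult_le_pos; auto| apply Rmult_le_compat_l; auto]. }
    rewrite Hs2 in H0.
    rewrite (Series_ext _ (fun m => u m * Wsum M K m)) in H0.
    2:{ intro m. unfold Wsum, f, sK. rewrite scal_sum. apply sum_eq. intros; ring. }
    assert (HeW : ex_series (fun m => u m * Wsum M K m)).
    { apply (ex_series_le_R _ (fun m => INR M * Rabs (u m))); [|apply ex_series_scal_R; auto].
      intro m. rewrite Rabs_mult. pose proof (W_bound M K m HM). pose proof (Rabs_pos (u m)). nra. }
    rewrite (Series_incr_n _ (S (K + L))) in H0; [|lia| auto]. simpl pred in H0.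
    rewrite (sum_single _ (K + L) K) in H0; [| lia| ].
    2:{ intros m Hm Hne. rewrite W_off; [ring| auto| unfold M; lia]. }
    rewrite W_diag in H0 by (unfold M; lia).
    set (T := Series (fun k => Rabs (u (S (K + L) + k)%nat))).
    assert (HT : Rabs (Series (fun k => u (S (K + L) + k)%nat * Wsum M K (S (K + L) + k))) <= INR M * T).
    { unfold T. rewrite <- Series_scal_l.
      assert (Htl : ex_series (fun k => Rabs (u (S (K + L) + k)%nat))) by (apply (ex_series_tail (fun m => Rabs (u m))); auto).
      eapply Rle_trans; [apply Series_Rabs|].
      - apply (ex_series_abs_le _ (fun k => INR M * Rabs (u (S (K + L) + k)%nat))); [|apply ex_series_scal_R; auto].
        intro k. rewrite Rabs_mult. pose proof (W_bound M K (S (K + L) + k) HM). pose proof (Rabs_pos (u (S (K + L) + k)%nat)). nra.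
      - apply Series_le; [|apply ex_series_scal_R; auto]. intro k. split; [apply Rabs_pos|].
        rewrite Rabs_mult. pose proof (W_bound M K (S (K + L) + k) HM). pose proof (Rabs_pos (u (S (K + L) + k)%nat)). nra. }
    assert (Hu2 : Rabs (u K) * (INR M / 2) <= INR M * T).
    { replace (u K * (INR M / 2)) with (- Series (fun k => u (S (K + L) + k)%nat * Wsum M K (S (K + L) + k))) in H0 |- * by lra.
      rewrite <- (Rabs_pos_eq (INR M / 2)) by lra. rewrite <- Rabs_mult.
      replace (u K * (INR M / 2)) with (- Series (fun k => u (S (K + L) + k)%nat * Wsum M K (S (K + L) + k))) by lra.
      rewrite Rabs_Ropp. auto. }
    apply (Rmult_le_reg_r (INR M / 2)); [lra|]. nra. }
  destruct (Req_dec (u K) 0) as [|Hne]; auto. exfalso.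
  pose proof (Series_Un_cv _ Hu) as Hc.
  assert (Hpos : 0 < Rabs (u K) / 4) by (pose proof (Rabs_pos_lt _ Hne); lra).
  destruct (Hc _ Hpos) as [N0 HN0].
  specialize (HN0 (K + N0)%nat ltac:(lia)). specialize (Hbound N0).
  rewrite <- (Series_tail (fun m => Rabs (u m))) in Hbound by auto.
  unfold Rdist in HN0. rewrite Rabs_minus_sym in HN0. apply Rabs_def2 in HN0.
  pose proof (Rabs_pos_lt _ Hne). lra.
Qed.

Lemma T_real a tau t p m : T a tau t (p, 0) m =
  (-2 * Im (beta a tau t m) * sin (2 * PI * (INR m + 1) * p), 2 * Re (beta a tau t m) * sin (2 * PI * (INR m + 1) * p)).
Proof.
  unfold T. rewrite !E_xy. destruct (beta a tau t m) as [b1 b2].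
  replace (2 * PI * - (INR m + 1) * p) with (- (2 * PI * (INR m + 1) * p)) by ring.
  rewrite cos_neg, sin_neg, !Rmult_0_r, exp_0.
  unfold Cmult, Cminus, Cplus, Copp, Re, Im. apply c_eq; cbn [fst snd]; ring.
Qed.

Theorem lemma5p14 (tau : CC) (t : R) (a : nat -> CC) :
  0 < Im tau ->
  0 < t ->
  ~ (exists n : nat, (0 < n)%nat /\ 2 / t = INR n) ->
  ad_inv_distribution a ->
  (forall z : CC, weighted_density a tau t (Cplus z tau) = weighted_density a tau t z) ->
  forall m : nat, a m = RtoC 0.
Proof.
  intros Ht2 Ht Hn Had Hyp m.
  assert (Hd : bdom a tau t) by (intros R HR; apply beta_dom; auto).
  pose proof (cos_ne_1 t Ht Hn) as Hc.
  assert (HG : forall p, Gs a tau t (p, 0) = RtoC 0).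
  { intro p. pose proof (key a tau t Ht2 Ht Hd Hyp (p - 1/2)) as Hk.
    replace (p - 1/2 + 1/2) with p in Hk by ring.
    assert (H2 : Cmod (Gs a tau t (p, 0)) ^ 2 = 0).
    { apply (Rmult_eq_reg_r (cos (4 * PI / t) - 1)); [|intro; apply Hc; lra].
      rewrite Rmult_0_l. rewrite Rmult_minus_distr_l, Hk. ring. }
    apply Cmod_eq_0. pose proof (Cmod_ge_0 (Gs a tau t (p, 0))). nra. }
  assert (HT : forall p, CS (T a tau t (p, 0)) = RtoC 0) by (intro; rewrite CS_T_Gs; auto).
  assert (Habs : ex_series (fun m => Cmod (beta a tau t m))).
  { apply (ex_series_ext_R (fun m => Cmod (beta a tau t m) * exp (2 * PI * (INR m + 1) * 0))).
    - intro k. rewrite Rmult_0_r, exp_0. ring.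
    - apply Hd. lra. }
  assert (HIm : forall p, Series (fun m => Im (beta a tau t m) * sin (2 * PI * (INR m + 1) * p)) = 0).
  { intro p. specialize (HT p). unfold CS in HT. apply (f_equal fst) in HT. cbn [fst] in HT.
    rewrite (Series_ext _ (fun m => -2 * (Im (beta a tau t m) * sin (2 * PI * (INR m + 1) * p)))) in HT.
    2:{ intro k. rewrite T_real. unfold Re at 1. cbn [fst]. ring. }
    rewrite Series_scal_l in HT. unfold RtoC in HT. cbn [fst] in HT. lra. }
  assert (HRe : forall p, Series (fun m => Re (beta a tau t m) * sin (2 * PI * (INR m + 1) * p)) = 0).
  { intro p. specialize (HT p). unfold CS in HT. apply (f_equal snd) in HT. cbn [snd] in HT.
    rewrite (Series_ext _ (fun m => 2 * (Re (beta a tau t m) * sin (2 * PI * (INR m + 1) * p)))) in HT.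
    2:{ intro k. rewrite T_real. unfold Im at 1. cbn [snd]. ring. }
    rewrite Series_scal_l in HT. unfold RtoC in HT. cbn [snd] in HT. lra. }
  assert (Hb1 : Im (beta a tau t m) = 0).
  { apply (extract (fun k => Im (beta a tau t k))); auto. apply (ex_series_abs_le _ _ (fun k => im_le_Cmod' _) Habs). }
  assert (Hb2 : Re (beta a tau t m) = 0).
  { apply (extract (fun k => Re (beta a tau t k))); auto. apply (ex_series_abs_le _ _ (fun k => re_le_Cmod' _) Habs). }
  assert (Hb : Cmod (beta a tau t m) = 0).
  { destruct (beta a tau t m) as [b1 b2]. unfold Re, Im in *. cbn [fst snd] in *. subst.
    unfold Cmod. cbn [fst snd]. replace (0 ^ 2 + 0 ^ 2) with 0 by ring. apply sqrt_0. }
  rewrite Cmod_beta in Hb. pose proof (exp_pos (- (PI * t * cm m) * Im tau)).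
  apply Cmod_eq_0. apply Rmult_integral in Hb. destruct Hb as [Hb|Hb]; [exact Hb| lra].
Qed.
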